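(* Let $I$ and $\tilde I$ be closed arcs of $\mathbb{T}$ with dyadic endpoints, and let $\xi\colon I\to\tilde I$ be a map onto $\tilde I$ that is linear in the angular coordinate with slope an integer power of $2$. Then $\xi$ belongs to the pseudo-group $\Upsilon_g$, i.e., there exist $m,n\in\mathbb{N}_0$ with $g^m\circ\xi=g^n$ on $I$.
   Context: $\mathbb{T}$ is the unit circle with angular coordinate $\theta\in\mathbb{R}/\mathbb{Z}$ (points $e^{2\pi i\theta}$); dyadic points are those with $\theta=k/2^j$. $g(z)=z^2$ is the doubling map $\theta\mapsto2\theta$ of $\mathbb{T}$. $\Upsilon_g$ denotes the collection of homeomorphisms $\xi\colon I\to\tilde I$ between arcs of $\mathbb{T}$ of the form $\xi=g^{-m}\circ g^n$ for some $m,n\in\mathbb{N}_0$, meaning that $\xi$ is a continuous lift of $g^n|_I$ under $g^m$, i.e., $g^m\circ\xi=g^n$ on $I$; such maps are linear in $\theta$ with slope $2^{n-m}$. *)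

(* Defs.v *)
(* the circle T = R/Z is modelled through lifts to R. *)
From Stdlib Require Export Reals ZArith.
Open Scope R_scope.

Definition circ_eq (x y : R) : Prop := exists z : Z, x - y = IZR z.

Definition dyadic (x : R) : Prop := exists (p : Z) (j : nat), x = IZR p / 2 ^ j.

Definition on_arc (a L theta : R) : Prop :=
  exists u : R, a <= u <= a + L /\ circ_eq theta u.

Definition dyadic_arc (a L : R) : Prop :=
  0 < L < 1 /\ dyadic a /\ dyadic (a + L).

(* Main.v *)
Require Import Defs.
From Stdlib Require Import Lra Lia.

Lemma int_01 (z : Z) : 0 < IZR z -> IZR z < 1 -> False.
Proof. intros H1 H2. apply lt_IZR in H1. apply lt_IZR in H2. lia. Qed.

Lemma pow2_IZR (n : nat) : 2 ^ n = IZR (2 ^ Z.of_nat n).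
Proof. rewrite <- pow_IZR. reflexivity. Qed.

Theorem lemma5p2 (a L b L' : R) (xi : R -> R) (k : Z) (c : R) :
  dyadic_arc a L ->
  dyadic_arc b L' ->
  (forall t, a <= t <= a + L -> xi t = powerRZ 2 k * t + c) ->
  (forall t, a <= t <= a + L -> on_arc b L' (xi t)) ->
  (forall theta, on_arc b L' theta ->
     exists t, a <= t <= a + L /\ circ_eq (xi t) theta) ->
  exists m n : nat, forall t, a <= t <= a + L ->
    circ_eq (2 ^ m * xi t) (2 ^ n * t).
Proof.
  intros [HL [[q [i Ha]] _]] [HL' [[p [j Hb]] _]] Hxi H4 H5.
  assert (HP : 0 < powerRZ 2 k) by (apply powerRZ_lt; lra).
  set (P := powerRZ 2 k) in *.
  destruct (H5 b) as [t0 [Ht0 [z1 Hz1]]].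
  { exists b. split; [lra|]. exists 0%Z. simpl; lra. }
  assert (Heq : t0 = a).
  { destruct (Rle_lt_or_eq_dec a t0 (proj1 Ht0)) as [Hlt|]; [|auto].
    exfalso.
    set (d := Rmin (t0 - a) ((1 - L') / (2 * P))).
    assert (Hd1 : d <= t0 - a) by apply Rmin_l.
    assert (Hd2 : d <= (1 - L') / (2 * P)) by apply Rmin_r.
    assert (Hd0 : 0 < d).
    { apply Rmin_glb_lt; [lra|]. apply Rdiv_lt_0_compat; lra. }
    assert (HPd : P * d <= (1 - L') / 2).
    { replace ((1 - L') / 2) with (P * ((1 - L') / (2 * P))) by (field; lra).
      apply Rmult_le_compat_l; lra. }
    assert (HPd0 : 0 < P * d) by (apply Rmult_lt_0_compat; lra).
    destruct (H4 (t0 - d)) as [u [Hu [z2 Hz2]]]; [lra|].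
    rewrite Hxi in Hz2 by lra. rewrite Hxi in Hz1 by lra.
    apply (int_01 (z1 - z2)); rewrite minus_IZR; nra. }
  subst t0. rewrite Hxi in Hz1 by lra.
  set (K := Z.abs_nat k).
  set (m := (i + j + K)%nat).
  set (n' := Z.to_nat (Z.of_nat j + Z.of_nat K + k)).
  assert (HK : (Z.of_nat K = Z.abs k)%Z) by (unfold K; lia).
  assert (Hn' : Z.of_nat n' = (Z.of_nat j + Z.of_nat K + k)%Z) by (unfold n'; lia).
  exists m, (i + n')%nat. intros t Ht. rewrite Hxi by exact Ht.
  assert (Hmk : 2 ^ (i + n') = 2 ^ m * P).
  { rewrite !pow_powerRZ. unfold P. rewrite <- powerRZ_add by lra.
    f_equal. unfold m. lia. }
  assert (Hm : 2 ^ m = 2 ^ (i + K) * 2 ^ j).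
  { rewrite <- pow_add. f_equal. unfold m. lia. }
  assert (Hc : c = b + IZR z1 - P * a) by lra.
  exists (2 ^ Z.of_nat m * z1 + 2 ^ Z.of_nat (i + K) * p - 2 ^ Z.of_nat n' * q)%Z.
  rewrite minus_IZR, plus_IZR, !mult_IZR, <- !pow2_IZR.
  rewrite Rmult_plus_distr_l, Hmk, Hc, Hb, Ha, Hm, pow_add.
  assert (0 < 2 ^ i) by (apply pow_lt; lra).
  assert (0 < 2 ^ j) by (apply pow_lt; lra).
  assert (Hn2 : 2 ^ n' = 2 ^ K * 2 ^ j * P).
  { apply (Rmult_eq_reg_l (2 ^ i)); [|lra]. rewrite <- pow_add, Hmk, Hm, pow_add. ring. }
  rewrite Hn2. field; lra.
Qed.
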